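(* Let $G$ be a query graph and let $R,S\in E^i$ be coupled edges with $S\not\lesssim R$ (i.e. $u_R\notin u_S^+$). Then $G$ admits an $(R,S)$-valid labeling.
   Context: $G=G[Q]$ is the query graph of a Boolean CQ without self-joins with atoms $R(u,v)$, $u\ne v$, first attribute the key: vertices are variables, each atom gives an edge $e_R=(u_R,v_R)$, consistent/inconsistent according to the type of $R$; $E^i$ = inconsistent edges. Paths may have zero edges; $x\leadsto y$ is a directed path; undirected paths ignore directions; for a path $P$ and vertex set $N$, $P\cap N$ is the set of vertices of $P$ in $N$. $u^+=\{v:u\leadsto v\}$, $u^{+,R}=\{v:u\leadsto v$ in $G-\{e_R\}\}$. For $R,S\in E^i$: $R\lesssim S$ iff $u_S\in u_R^+$; $R\sim S$ iff $R\lesssim S$ and $S\lesssim R$; $[R]$ is the class of $R$; $coupled^+(R)=[R]\cup\{S\in E^i:\exists$ undirected path $P$ from $v_R$ to $u_S$ with $P\cap u_R^{+,R}=\emptyset\}$; $R,S$ are coupled if $R\in coupled^+(S)$ and $S\in coupled^+(R)$. Label lattice: $\mathcal L=\{\bot,\mathbb B,X,\Phi,X^*,\top\}$ ordered as the lattice generated by $\bot<\mathbb B<\Phi<\top$, $\mathbb B<X^*<\top$, $\bot<X<X^*$ (so $\bot$ is least, $\top$ greatest, $\Phi$ and $X$ incomparable, $\Phi$ and $X^*$ incomparable, $X$ and $\mathbb B$ incomparable; e.g. $\Phi\wedge X^*=\mathbb B$, $\Phi\wedge X=\bot$, $\mathbb B\vee X=X^*$). For $R,S\in E^i$, a labeling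 $L:V(G)\to\mathcal L$ is $(R,S)$-valid if: (1) $L(u_R)=\Phi$ and $L(v_R)\in\{\top,X,X^*\}$; (2) $L(u_S)=X$ and $L(v_S)\in\{\mathbb B,X^*\}$; (3) for every edge $T\in E^i\setminus\{R,S\}$, $L(u_T)\ge L(v_T)$; (4) there is an undirected path $P_R$ from $v_R$ to $u_S$ with $L(w)\ge X$ for every vertex $w$ of $P_R$; (5) there is an undirected path $P_S$ from $v_S$ to $u_R$ with $L(w)\ge\mathbb B$ for every vertex $w$ of $P_S$. *)

(* Defs.v *)
From mathcomp Require Import all_boot.
Set Implicit Arguments. Unset Strict Implicit. Unset Printing Implicit Defensive.

(* A query graph of a Boolean self-join-free CQ with binary atoms R(u,v),
   u <> v, first attribute the key.  Vertices = variables, edges = atoms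
   (a multigraph: distinct atoms may share endpoints).  [qincons e] says
   the atom (relation) of edge e is of inconsistent type. *)
Record qgraph := QGraph {
  qV : finType;
  qE : finType;
  qsrc : qE -> qV;              (* u_R : key attribute *)
  qtgt : qE -> qV;
  qincons : pred qE;
  qsrc_neq_tgt : forall e, qsrc e != qtgt e
}.

Section QG.
Variable G : qgraph.
Local Notation V := (qV G).
Local Notation E := (qE G).

Definition dstep (A : pred E) : rel V :=
  fun x y => [exists e, [&& A e, qsrc e == x & qtgt e == y]].

Definition dreach (A : pred E) (x y : V) : Prop :=
  exists p : seq V, path (dstep A) x p /\ last x p = y.

Definition plus (u v : V) : Prop := dreach predT u v.
Definition plusR (R : E) (u v : V) : Prop :=
  dreach (fun e => e != R) u v.

Definition uadj : rel V :=
  fun x y => [exists e, ((qsrc e == x) && (qtgt e == y))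
                     || ((qsrc e == y) && (qtgt e == x))].

Definition upath_in (P : V -> Prop) (x y : V) : Prop :=
  exists p : seq V, [/\ path uadj x p, last x p = y &
                        forall w, w \in x :: p -> P w].

Definition lesssim (R S : E) : Prop := plus (qsrc R) (qsrc S).
Definition simeq (R S : E) : Prop := lesssim R S /\ lesssim S R.

Definition in_coupled_plus (R S : E) : Prop :=
  qincons S /\
  (simeq R S \/
   upath_in (fun w => ~ plusR R (qsrc R) w) (qtgt R) (qsrc S)).

Definition coupled (R S : E) : Prop :=
  in_coupled_plus S R /\ in_coupled_plus R S.

End QG.

Inductive label := LBot | LB | LX | LPhi | LXs | LTop.

(* order generated by bot<B<Phi<top, B<X*<top, bot<X<X* *)
Definition leL (a b : label) : bool :=
  match a, b with
  | LBot, _ => true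
  | _, LTop => true
  | LB, (LB | LPhi | LXs) => true
  | LX, (LX | LXs) => true
  | LPhi, LPhi => true
  | LXs, LXs => true
  | _, _ => false
  end.

Section Valid.
Variable G : qgraph.
Local Notation V := (qV G).
Local Notation E := (qE G).

Definition valid_labeling (R S : E) (L : V -> label) : Prop :=
  [/\ L (qsrc R) = LPhi /\ (L (qtgt R) = LTop \/ L (qtgt R) = LX \/ L (qtgt R) = LXs),
      L (qsrc S) = LX /\ (L (qtgt S) = LB \/ L (qtgt S) = LXs),
      (forall T : E, qincons T -> T != R -> T != S ->
          leL (L (qtgt T)) (L (qsrc T))),
      upath_in (fun w => leL LX (L w)) (qtgt R) (qsrc S)
    & upath_in (fun w => leL LB (L w)) (qtgt S) (qsrc R)].
End Valid.

(* Main.v *)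
Require Import Defs.
From mathcomp Require Import all_boot.
From Stdlib Require Import ClassicalEpsilon.

Section H.
Variable G : qgraph.

Lemma dreach_refl (A : pred (qE G)) x : dreach A x x.
Proof. by exists [::]. Qed.

Lemma dreach_snoc (A : pred (qE G)) x y (e : qE G) :
  dreach A x y -> A e -> qsrc e = y -> dreach A x (qtgt e).
Proof.
move=> [p [Hp Hl]] Ae He; exists (rcons p (qtgt e)); split.
  rewrite rcons_path Hp Hl /=; apply/existsP; exists e.
  by rewrite Ae He !eqxx.
by rewrite last_rcons.
Qed.

Lemma dreach_cons (A : pred (qE G)) y z (e : qE G) :
  dreach A y z -> A e -> qtgt e = y -> dreach A (qsrc e) z.
Proof.
move=> [p [Hp Hl]] Ae He; exists (y :: p); split => //=.
rewrite Hp andbT; apply/existsP; exists e; by rewrite Ae He !eqxx.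
Qed.

Lemma upath_mono (P Q : qV G -> Prop) x y :
  (forall w, P w -> Q w) -> upath_in P x y -> upath_in Q x y.
Proof. by move=> PQ [p [H1 H2 H3]]; exists p; split => // w /H3 /PQ. Qed.

Lemma upath_ends (P : qV G -> Prop) x y : upath_in P x y -> P x /\ P y.
Proof.
move=> [p [_ H2 H3]]; split; first by apply: H3; rewrite inE eqxx.
by rewrite -H2; apply: H3; exact: mem_last.
Qed.
End H.

Definition bP (P : Prop) : bool :=
  if excluded_middle_informative P then true else false.
Lemma bPE P : bP P = true <-> P.
Proof. by rewrite /bP; case: excluded_middle_informative. Qed.
Lemma bPF P : bP P = false <-> ~ P.
Proof. by rewrite /bP; case: excluded_middle_informative. Qed.

Definition enc (b r a : bool) : label :=
  if b then (if a then LBot else LX)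
  else if r then (if a then LPhi else LTop)
  else (if a then LB else LXs).

Lemma enc_mono (bu ru au bv rv av : bool) :
  (bu -> bv) -> (rv -> ru) -> (au -> av) -> leL (enc bv rv av) (enc bu ru au).
Proof.
by case: bu; case: ru; case: au; case: bv; case: rv; case: av => //= H1 H2 H3;
  (have := H1 isT) || (have := H2 isT) || (have := H3 isT).
Qed.

Theorem proposition6p2 (G : qgraph) (R S : qE G) :
  qincons R -> qincons S ->
  coupled R S ->
  ~ lesssim S R ->
  exists L : qV G -> label, valid_labeling R S L.
Proof.
move=> iR iS [[_ cS] [_ cR]] nSR.
have P2 : upath_in (fun w => ~ plusR S (qsrc S) w) (qtgt S) (qsrc R).
  by case: cS => // -[]; move/nSR.
have P1 : upath_in (fun w => ~ plusR R (qsrc R) w) (qtgt R) (qsrc S).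
  by case: cR => // -[] _; move/nSR.
pose inA w := bP (plusR R (qsrc R) w).
pose inB w := bP (plusR S (qsrc S) w).
pose rch w := bP (plus w (qsrc R)).
exists (fun w => enc (inB w) (rch w) (inA w)).
have [nAvR nAuS] := @upath_ends _ _ _ _ P1.
have [nBvS nBuR] := @upath_ends _ _ _ _ P2.
rewrite /valid_labeling; cbv beta.
have -> : inA (qtgt R) = false by apply/bPF.
have -> : inA (qsrc S) = false by apply/bPF.
have -> : inB (qtgt S) = false by apply/bPF.
have -> : inB (qsrc R) = false by apply/bPF.
have -> : inA (qsrc R) = true by apply/bPE; exact: dreach_refl.
have -> : inB (qsrc S) = true by apply/bPE; exact: dreach_refl.
have -> : rch (qsrc R) = true by apply/bPE; exact: dreach_refl.
have -> : rch (qtgt S) = false.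
  apply/bPF => H; apply: nSR; exact: (@dreach_cons _ predT _ _ S H isT erefl).
split => /=.
- by split => //; case: (inB _); case: (rch _); auto.
- by split => //; case: (inA _); auto.
- move=> T _ nTR nTS; apply: enc_mono.
  + by move/bPE => H; apply/bPE; exact: (@dreach_snoc _ _ _ _ T H _ erefl).
  + by move/bPE => H; apply/bPE; exact: (@dreach_cons _ predT _ _ T H isT erefl).
  + by move/bPE => H; apply/bPE; exact: (@dreach_snoc _ _ _ _ T H _ erefl).
- apply: (@upath_mono _ _ _ _ _ _ P1) => w /bPF Hw.
  rewrite /inA /inB /rch Hw; by case: bP; case: bP.
- apply: (@upath_mono _ _ _ _ _ _ P2) => w /bPF Hw.
  rewrite /inA /inB /rch Hw; by case: bP; case: bP.
Qed.
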